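(* Let $k$ and $d$ be positive integers with $k\geq 2d$, and let $G^d_k$ be the circular clique graph. Then $\chi(G^d_k)\geq box(G^d_k)$.
   Context: The circular clique $G^d_k$ (for positive integers $k\ge 2d$) is the simple graph with vertex set $\{a_j : 0\leq j\leq k-1\}$ in which $a_ia_j$ is an edge if and only if $d\leq |i-j|\leq k-d$. $\chi(G)$ denotes the chromatic number. An $\ell$-box is a Cartesian product $[x_1,y_1]\times\cdots\times[x_\ell,y_\ell]$ of $\ell$ closed bounded real intervals; the boxicity $box(G)$ of a graph $G$ is the least positive integer $\ell$ such that $G$ is isomorphic to the intersection graph of a family of $\ell$-boxes (vertices are boxes, adjacent iff the boxes intersect). *)

(* Defs.v *)
From Stdlib Require Import Reals.
From mathcomp Require Import all_boot.
Set Implicit Arguments. Unset Strict Implicit. Unset Printing Implicit Defensive.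

Definition distn (i j : nat) : nat := if i <= j then j - i else i - j.

Definition circ_adj (k d : nat) : rel 'I_k :=
  fun i j => (d <= distn i j) && (distn i j <= k - d).
Arguments circ_adj : clear implicits.

Definition colorable (T : finType) (e : rel T) (c : nat) : Prop :=
  exists f : T -> 'I_c, forall u v, e u v -> f u <> f v.

Definition is_chromatic_number (T : finType) (e : rel T) (c : nat) : Prop :=
  colorable e c /\ forall m, m < c -> ~ colorable e m.

Definition in_box (l : nat) (lo hi : 'I_l -> R) (x : 'I_l -> R) : Prop :=
  forall i, Rle (lo i) (x i) /\ Rle (x i) (hi i).

Definition box_representable (T : finType) (e : rel T) (l : nat) : Prop :=
  exists lo hi : T -> 'I_l -> R,
    (forall v i, Rle (lo v i) (hi v i)) /\
    forall u v, u <> v ->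
      (e u v <-> exists x : 'I_l -> R, in_box (lo u) (hi u) x /\ in_box (lo v) (hi v) x).

Definition is_boxicity (T : finType) (e : rel T) (b : nat) : Prop :=
  0 < b /\ box_representable e b /\
  forall l, 0 < l -> l < b -> ~ box_representable e l.

(* Main.v *)
Require Import Defs.
From mathcomp Require Import all_boot zify.
From Stdlib Require Import Lia Lra.
From Stdlib Require Import Reals Classical.
Section S.
Variables (k d : nat).
Definition inb (j v : nat) := (j * d <= v) && (v < j * d + d).
Definition blo (j v : nat) : nat := if inb j v then v else 0.
Definition bhi (j v : nat) : nat :=
  if inb j v then v else if v < j * d then v + k - d else v - d.
Definition Icap (j u v : nat) := (blo j u <= bhi j v) && (blo j v <= bhi j u).

Lemma Icap_adj (hd : 0 < d) (hk : 2 * d <= k) (j u v : nat) :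
  u < k -> v < k -> u != v -> (d <= distn u v) && (distn u v <= k - d) -> Icap j u v.
Proof.
rewrite /Icap /blo /bhi /inb /distn => hu hv huv.
set p := j * d; clearbody p.
repeat case: ifP; move=> *; lia.
Qed.

Lemma Icap_nadj (hd : 0 < d) (hk : 2 * d <= k) (c : nat) (hc : k <= c * d) (u v : nat) :
  u < k -> v < k -> u != v -> ~~ ((d <= distn u v) && (distn u v <= k - d)) ->
  exists2 j, j < c & ~~ Icap j u v.
Proof.
move=> hu hv huv.
wlog huv2 : u v hu hv huv / u < v.
  move=> W; case: (ltngtP u v) => h.
  - exact: W.
  - have -> : distn u v = distn v u by rewrite /distn; case: (leqP u v); case: (leqP v u); lia.
    move=> H; case: (W v u hv hu _ h H); first by rewrite eq_sym.
    by move=> j hj; rewrite /Icap andbC => ?; exists j.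
  - by rewrite h eqxx in huv.
have hdist : distn u v = v - u by rewrite /distn ltnW.
rewrite hdist => H.
have Hcase : v - u < d \/ k - d < v - u by lia.
have blk : forall w, w < k -> w %/ d < c /\ (w %/ d) * d <= w /\ w < (w %/ d) * d + d.
  move=> w hw; split; first by rewrite ltn_divLR //; lia.
  split; first exact: leq_trunc_div.
  by have := ltn_ceil w hd; rewrite mulSn addnC.
case: Hcase => Hc.
- have [hj [b1 b2]] := blk u hu; exists (u %/ d) => //.
  move: b1 b2; rewrite /Icap /blo /bhi /inb.
  set j := u %/ d; set p := j * d; clearbody p.
  move=> b1 b2.
  repeat case: ifP; move=> *; lia.
- have [hj [b1 b2]] := blk v hv; exists (v %/ d) => //.
  move: b1 b2; rewrite /Icap /blo /bhi /inb.
  set j := v %/ d; set p := j * d; clearbody p.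
  move=> b1 b2.
  repeat case: ifP; move=> *; lia.
Qed.
End S.

Lemma indep (k d : nat) (hd : 0 < d) (hk : 2 * d <= k) (A : {pred 'I_k}) :
  (forall u v : 'I_k, u \in A -> v \in A -> (nat_of_ord u == nat_of_ord v) || ~~ circ_adj k d u v) -> #|A| <= d.
Proof.
move=> H.
case: (pickP A) => [i0 Ai0 | A0]; last by rewrite eq_card0.
case: (arg_minnP (fun i : 'I_k => val i) Ai0) => s0 Hs0 Hmin.
case: d hd hk H => // d' _ hk H.
pose psi (s : 'I_k) : 'I_d'.+1 :=
  inord (if s - s0 < d'.+1 then s - s0 else s - s0 - (k - d'.+1)).
have -> : d'.+1 = #|'I_d'.+1| by rewrite card_ord.
apply: (@leq_card_in _ _ psi) => x y Ax Ay E.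
apply: ord_inj.
have h1 := H x y Ax Ay; have h2 := H x s0 Ax Hs0; have h3 := H y s0 Ay Hs0.
have h4 : (s0 <= x)%N := Hmin x Ax; have h5 : (s0 <= y)%N := Hmin y Ay; have h6 := ltn_ord x; have h7 := ltn_ord y.
move: (congr1 val E); rewrite /psi /= !inordK; last 2 first.
- case: ifP => //; lia.
- case: ifP => //; lia.
move: h1 h2 h3; rewrite /circ_adj /distn.
repeat case: ifP; move=> *; lia.

Qed.




Lemma min_exists (P : nat -> Prop) n : P n ->
  exists b, P b /\ (forall l, l < b -> ~ P l) /\ b <= n.
Proof.
elim: n {-2}n (leqnn n) => [|N IH] n hn Pn.
  exists n; split => //; split => // l hl; lia.
case: (classic (exists l, l < n /\ P l)) => [[l [hl Pl]]|nex].
  have [b [Pb [Hb bl]]] := IH l ltac:(lia) Pl.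
  exists b; split => //; split => //; lia.
exists n; split => //; split => // l hl Pl; apply: nex; by exists l.
Qed.

Lemma INR_leb (a b : nat) : Rle (INR a) (INR b) <-> a <= b.
Proof. split => [/INR_le/leP // | /leP/le_INR //]. Qed.

Theorem theorem2p2 (k d : nat) (hd : 0 < d) (hk : 2 * d <= k) (c : nat) :
  is_chromatic_number (circ_adj k d) c ->
  exists b, is_boxicity (circ_adj k d) b /\ b <= c.
Proof.
move=> [[f Hf] _].
have k0 : 0 < k by lia.
have c0 : 0 < c by have := ltn_ord (f (Ordinal k0)); lia.
have hc : k <= c * d.
  rewrite -{1}[k]card_ord -sum1_card (partition_big f predT) //=.
  have H1 : forall col : 'I_c, true -> \sum_(i < k | f i == col) 1 <= d.
    move=> col _.
    rewrite sum1_card; apply: indep => // u v Hu Hv.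
    have fu : f u = col by apply: val_inj; apply/eqnP; exact: Hu.
    have fv : f v = col by apply: val_inj; apply/eqnP; exact: Hv.
    case: (boolP (circ_adj k d u v)) => [adj|]; last by rewrite orbT.
    by case: (Hf u v adj); rewrite fu fv.
  apply: (@leq_trans (\sum_(j < c) d)); first exact: leq_sum H1.
  by rewrite big_const_ord iter_addn_0 mulnC.
have rep : box_representable (circ_adj k d) c.
  exists (fun (v : 'I_k) (i : 'I_c) => INR (blo d i v)), (fun (v : 'I_k) (i : 'I_c) => INR (bhi k d i v)).
  split.
    move=> v i; apply/INR_leb; rewrite /blo /bhi; case: ifP => //.
  move=> u v nuv.
  have nuv' : nat_of_ord u != v by apply/eqP => /ord_inj.
  split.
  - move=> adj.
    have HI := fun j => @Icap_adj k d hd hk j u v (ltn_ord u) (ltn_ord v) nuv' adj.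
    exists (fun i : 'I_c => INR (maxn (blo d i u) (blo d i v))).
    have bb : forall j w, blo d j w <= bhi k d j w by move=> j w; rewrite /blo /bhi; case: ifP.
    split => i; move/andP: (HI i) => [h1 h2]; split; apply/INR_leb;
      rewrite ?leq_maxr ?leq_maxl ?geq_max ?h1 ?h2 ?bb //.
  - move=> [x [Bu Bv]].
    apply: contraT => nadj.
    have [j hj HI] := @Icap_nadj k d hd hk c hc u v (ltn_ord u) (ltn_ord v) nuv' nadj.
    case/negP: HI.
    have [a1 b1] := Bu (Ordinal hj); have [a2 b2] := Bv (Ordinal hj).
    apply/andP; split; apply/INR_leb; simpl in *; lra.
have [b [[b0 Pb] [Hb bc]]] := @min_exists (fun l => 0 < l /\ box_representable (circ_adj k d) l) c (conj c0 rep).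
exists b; split => //; split => //; split => // l l0 lb R.
by apply: (Hb l lb).
Qed.
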